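(* Let $u\geq 1$, $a=(-u,-1)$, $b=(u,1)$, $s(x)=-x/u$, and fix $x<-u$. Then for all $p\neq 0$ close enough to zero, whenever $y_p>1$ and $(x,y_p)\in B_p(a,b)$, we have $y_p<2\,s(x)+3$.
   Context: For $p\neq 0$ and $(x,y)\in\mathbb{R}^2$ let $L_p((x,y))=(|x|^p+|y|^p)^{1/p}$; for $p<0$ this is extended by setting $L_p((x,y))=0$ whenever $x=0$ or $y=0$. The bisector is $B_p(a,b)=\{q\in\mathbb{R}^2: L_p(a-q)=L_p(b-q)\}$. *)

(* Defs.v *)
From Stdlib Require Import Reals.
Open Scope R_scope.

(* |t|^p for real exponent p; for t = 0 we use 0 (only relevant for p > 0,
   since for p < 0 the L_p convention below handles zero coordinates). *)
Definition abspow (t p : R) : R :=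
  if Req_EM_T t 0 then 0 else Rpower (Rabs t) p.

(* L_p((x,y)) = (|x|^p + |y|^p)^(1/p), with L_p = 0 when p < 0 and x = 0 or y = 0.
   For p > 0 and x = y = 0 the value is 0. *)
Definition Lp (p : R) (v : R * R) : R :=
  let '(x, y) := v in
  if Rlt_dec p 0 then
    (if Req_EM_T x 0 then 0 else if Req_EM_T y 0 then 0
     else Rpower (abspow x p + abspow y p) (1 / p))
  else
    (if Req_EM_T (abspow x p + abspow y p) 0 then 0
     else Rpower (abspow x p + abspow y p) (1 / p)).

Definition vsub (a b : R * R) : R * R := (fst a - fst b, snd a - snd b).

Definition bisector (p : R) (a b : R * R) (q : R * R) : Prop :=
  Lp p (vsub a q) = Lp p (vsub b q).

(* Main.v *)
Require Import Defs.
From Stdlib Require Import Reals Lra Psatz.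
Open Scope R_scope.

Lemma abspow_nz t p : t <> 0 -> abspow t p = Rpower (Rabs t) p.
Proof. intro h. unfold abspow. destruct (Req_EM_T t 0); [contradiction|reflexivity]. Qed.

Lemma Lp_nz p a b : p <> 0 -> a <> 0 -> b <> 0 ->
  Lp p (a, b) = Rpower (Rpower (Rabs a) p + Rpower (Rabs b) p) (1 / p).
Proof.
  intros hp ha hb. unfold Lp. rewrite !abspow_nz by assumption.
  destruct (Rlt_dec p 0).
  - destruct (Req_EM_T a 0); [contradiction|]. destruct (Req_EM_T b 0); [contradiction|]. reflexivity.
  - destruct (Req_EM_T _ 0) as [e|]; [|reflexivity].
    exfalso. unfold Rpower in e. pose proof (exp_pos (p * ln (Rabs a))).
    pose proof (exp_pos (p * ln (Rabs b))). lra.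
Qed.

Lemma Rpower_inj_base A B p : p <> 0 -> 0 < A -> 0 < B ->
  Rpower A (1/p) = Rpower B (1/p) -> A = B.
Proof.
  intros hp hA hB e.
  assert (Rpower (Rpower A (1/p)) p = Rpower (Rpower B (1/p)) p) by now rewrite e.
  rewrite !Rpower_mult in H. replace (1/p*p) with 1 in H by (field; auto).
  rewrite !Rpower_1 in H; auto.
Qed.

Lemma mvt_pow p a b : 0 < a < b -> exists c, a < c < b /\
  Rpower b p - Rpower a p = p * Rpower c (p - 1) * (b - a).
Proof.
  intros [ha hab].
  destruct (MVT_cor2 (fun t => Rpower t p) (fun t => p * Rpower t (p-1)) a b hab)
    as [c [e hc]].
  - intros c hc. apply derivable_pt_lim_power. lra.
  - exists c. split; [exact hc|]. exact e.
Qed.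

Theorem lemma7 (u x : R) (hu : 1 <= u) (hx : x < - u) :
  exists delta : R, 0 < delta /\
    forall p : R, p <> 0 -> Rabs p < delta ->
      forall y : R, 1 < y ->
        bisector p (- u, -1) (u, 1) (x, y) ->
        y < 2 * (- x / u) + 3.
Proof.
  pose proof ln_lt_2 as l2.
  assert (lu : 0 <= ln u).
  { destruct (Req_dec u 1) as [->|]; [rewrite ln_1; lra|].
    rewrite <- ln_1. left. apply ln_increasing; lra. }
  exists (Rmin 1 (ln 2 / (1 + ln u))). split.
  { apply Rmin_pos; [lra|]. apply Rdiv_lt_0_compat; lra. }
  intros p hp hpd y hy hb.
  assert (hp1 : Rabs p < 1) by (eapply Rlt_le_trans; [exact hpd| apply Rmin_l]).
  assert (hp2 : Rabs p * (1 + ln u) < ln 2).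
  { assert (Rabs p < ln 2 / (1 + ln u)) by (eapply Rlt_le_trans; [exact hpd| apply Rmin_r]).
    apply Rmult_lt_compat_r with (r := 1 + ln u) in H; [|lra].
    unfold Rdiv in H. rewrite Rmult_assoc, Rinv_l in H; lra. }
  unfold bisector, vsub in hb; cbn [fst snd] in hb.
  rewrite !Lp_nz in hb by (auto; lra).
  apply Rpower_inj_base in hb; auto;
    try (apply Rplus_lt_0_compat; apply exp_pos).
  replace (Rabs (-u - x)) with (-x - u) in hb by (rewrite Rabs_right; lra).
  replace (Rabs (-1 - y)) with (y + 1) in hb by (rewrite Rabs_left; lra).
  replace (Rabs (u - x)) with (-x + u) in hb by (rewrite Rabs_right; lra).
  replace (Rabs (1 - y)) with (y - 1) in hb by (rewrite Rabs_left; lra).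
  destruct (mvt_pow p (y-1) (y+1)) as [c1 [hc1 e1]]; [lra|].
  destruct (mvt_pow p (-x-u) (-x+u)) as [c2 [hc2 e2]]; [lra|].
  assert (E : p * Rpower c1 (p-1) * 2 = p * Rpower c2 (p-1) * (2*u)).
  { replace 2 with (y + 1 - (y - 1)) at 1 by ring.
    replace (2*u) with (-x + u - (-x - u)) by ring. lra. }
  assert (E2 : Rpower c1 (p-1) = u * Rpower c2 (p-1)).
  { apply Rmult_eq_reg_l with (r := 2*p); [|lra]. lra. }
  assert (L : (p-1) * ln c1 = ln u + (p-1) * ln c2).
  { rewrite <- !ln_Rpower, E2, ln_mult; auto; [lra|apply exp_pos]. }
  destruct (Rlt_or_le y (2 * (- x / u) + 3)) as [|hge]; [assumption|exfalso].
  assert (hc : 2 / u * c2 < c1).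
  { assert (2 / u * c2 < 2/u * (-x+u)).
    { apply Rmult_lt_compat_l; [apply Rdiv_lt_0_compat|]; lra. }
    replace (2/u*(-x+u)) with (2*(-x/u)+2) in H by (field; lra). lra. }
  assert (lc : ln 2 - ln u + ln c2 < ln c1).
  { apply ln_increasing in hc; [|apply Rmult_lt_0_compat; [apply Rdiv_lt_0_compat|]; lra].
    unfold Rdiv in hc. rewrite !ln_mult, ln_Rinv in hc; try lra.
    apply Rinv_0_lt_compat; lra. apply Rmult_lt_0_compat; [lra|]. apply Rinv_0_lt_compat; lra. }
  assert (hpl : p < 1) by (pose proof (Rle_abs p); lra).
  assert (K : (p-1) * (ln c1) < (p-1) * (ln 2 - ln u + ln c2)).
  { apply Rmult_lt_gt_compat_neg_l; lra. }
  destruct (Rlt_or_le p 0) as [hn|hpos].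
  - rewrite Rabs_left in hp2 by lra. nra.
  - nra.
Qed.
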